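(* Consider the fixed-design additive regression setting, the estimator $\hat g=\sum_{j=1}^p\hat g_j$ and the tuning parameters described in the context. Assume the sub-Gaussian noise condition and the entropy condition hold, and that the empirical compatibility condition holds for some subset $S\subset\{1,\dots,p\}$ and constants $\kappa_0>0$, $\xi_0>1$. Let $\bar g=\sum_{j=1}^p\bar g_j\in\mathcal G$ be arbitrary. Then for any $A_0>(\xi_0+1)/(\xi_0-1)$, with probability at least $1-\epsilon$, $$\mathcal D_n(\hat g,\bar g)\le \xi_1^{-1}\Delta_n(\bar g,S)+2\xi_2^2\kappa_0^{-2}\Big(\sum_{j\in S}\lambda_{nj}^2\Big),$$ where $\xi_1=1-2A_0/\{(\xi_0+1)(A_0-1)\}\in(0,1]$, $\xi_2=(\xi_0+1)(A_0-1)$, $$\mathcal D_n(\hat g,\bar g)=\tfrac12\|\hat g-g^*\|_n^2+\tfrac12\|\hat g-\bar g\|_n^2+(A_0-1)R_n(\hat g-\bar g),$$ $$\Delta_n(\bar g,S)=\tfrac12\|\bar g-g^*\|_n^2+2A_0\Big(\sum_{j=1}^p\rho_{nj}\|\bar g_j\|_{F,j}+\sum_{j\notin S}\lambda_{nj}\|\bar g_j\|_n\Big),$$ and $R_n(\hat g-\bar g)=\sum_{j}\{\rho_{nj}\|\hat g_j-\bar g_j\|_{F,j}+\lambda_{nj}\|\hat g_j-\bar g_j\|_n\}$.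
   Context: Data: $(Y_i,X_i)$, $i=1,\dots,n$, with $Y_i\in\mathbb R$, $X_i\in\mathbb R^d$, $Y_i=g^*(X_i)+\varepsilon_i$, where $g^*:\mathbb R^d\to\mathbb R$ is an arbitrary (not necessarily additive) function. Fixed design: $X_1,\dots,X_n$ are deterministic and probabilities refer to the noise. For $j=1,\dots,p$, $x^{(j)}$ is a fixed sub-vector of coordinates of $x\in\mathbb R^d$, $\mathcal G_j$ is a vector space of real functions of $x^{(j)}$ with a semi-norm $\|\cdot\|_{F,j}$, and $\mathcal G=\{g(x)=\sum_{j=1}^pg_j(x^{(j)}):g_j\in\mathcal G_j\}$; every $g\in\mathcal G$ is considered together with a decomposition $g=\sum_jg_j$, and component-wise quantities refer to it. Empirical norm and inner product: $\|f\|_n^2=n^{-1}\sum_{i=1}^nf(X_i)^2$, $\|Y-g\|_n^2=n^{-1}\sum_i\{Y_i-g(X_i)\}^2$, $\langle\varepsilon,f\rangle_n=n^{-1}\sum_i\varepsilon_if(X_i)$. $H(u,\mathcal F,\|\cdot\|)$ denotes the log of the minimal number of $\|\cdot\|$-balls of radius $u$ covering $\mathcal F$. Sub-Gaussian noise condition: $\varepsilon_1,\dots,\varepsilon_n$ are independent with mean zero and $\max_i D_0E\exp(\varepsilon_i^2/D_0)\le D_1$ for constants $D_0,D_1>0$. $C_1=C_1(D_0,D_1)>0$ is a constant depending only on $(D_0,D_1)$ such that for every $\delta>0$ and every class $\mathcal F$ with $\sup_{f\in\mathcal F}\|f\|_n\le\delta$ and every $\psi\ge\int_0^\delta H^{1/2}(u,\mathcal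 F,\|\cdot\|_n)du$, one has $P\{\sup_{f\in\mathcal F}|\langle\varepsilon,f\rangle_n|/C_1>n^{-1/2}\psi+\delta\sqrt{t/n}\}\le e^{-t}$ for all $t>0$. Entropy condition: for each $j$, with $\mathcal G_j(\delta)=\{f\in\mathcal G_j:\|f\|_{F,j}+\|f\|_n/\delta\le1\}$, a function $\psi_{nj}$ satisfies $\psi_{nj}(\delta)\ge\int_0^\delta H^{1/2}(u,\mathcal G_j(\delta),\|\cdot\|_n)\,du$ for $0<\delta\le1$. Tuning and estimator: constants $0<\epsilon<1$ and $0<w_{nj}\le1$; $\gamma_{nj}=n^{-1/2}\psi_{nj}(w_{nj})/w_{nj}$; $\lambda_{nj}=C_1\{\gamma_{nj}+\sqrt{\log(p/\epsilon)/n}\}$; $\rho_{nj}=\lambda_{nj}w_{nj}$; $R_n(g)=\sum_{j=1}^p(\rho_{nj}\|g_j\|_{F,j}+\lambda_{nj}\|g_j\|_n)$. For a constant $A_0>1$, $\hat g=\sum_j\hat g_j$ is a minimizer of $K_n(g)=\|Y-g\|_n^2/2+A_0R_n(g)$ over $g\in\mathcal G$ and decompositions. Empirical compatibility condition for $(S,\kappa_0,\xi_0)$: for all $f_j\in\mathcal G_j$ and $f=\sum_jf_j$, if $\sum_{j=1}^p\lambda_{nj}w_{nj}\|f_j\|_{F,j}+\sum_{j\notin S}\lambda_{nj}\|f_j\|_n\le\xi_0\sum_{j\in S}\lambda_{nj}\|f_j\|_n$, then $\kappa_0^2(\sum_{j\in S}\lambda_{nj}\|f_j\|_n)^2\le(\sum_{j\in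 S}\lambda_{nj}^2)\|f\|_n^2$. *)

(* Defs.v *)
From HB Require Import structures.
From mathcomp Require Import all_boot all_order all_algebra.
From mathcomp Require Import all_classical all_reals all_analysis.
Set Implicit Arguments.
Unset Strict Implicit.
Unset Printing Implicit Defensive.
Import Order.TTheory GRing.Theory Num.Theory.
Local Open Scope classical_set_scope.
Local Open Scope ring_scope.

Section Defs.
Variables (R : realType) (d n : nat) (X : 'I_n -> 'rV[R]_d).

Notation fn := ('rV[R]_d -> R).

Definition emp_norm (f : fn) : R :=
  Num.sqrt (n%:R^-1 * \sum_(i < n) f (X i) ^+ 2).

Definition emp_sq_res (y : 'I_n -> R) (f : fn) : R :=
  n%:R^-1 * \sum_(i < n) (y i - f (X i)) ^+ 2.

Definition emp_inner (e : 'I_n -> R) (f : fn) : R :=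
  n%:R^-1 * \sum_(i < n) e i * f (X i).

Definition covered_by (u : R) (F : set fn) (N : nat) : Prop :=
  exists c : 'I_N -> fn,
    forall f, F f -> exists k : 'I_N, emp_norm (fun x => f x - c k x) <= u.

(* metric entropy H(u, F, ||.||_n) = log of minimal covering number
   (+oo if no finite cover exists) *)
Definition entropy (u : R) (F : set fn) : \bar R :=
  ereal_inf [set (ln (N%:R) : R)%:E | N in [set N : nat | covered_by u F N]].

Definition entropy_integral (delta : R) (F : set fn) : \bar R :=
  (\int[@lebesgue_measure R]_(u in `[0%R, delta]) sqrte (entropy u F))%E.

End Defs.

Definition gsum (R : realType) (d p : nat) (gs : 'I_p -> 'rV[R]_d -> R) :
  'rV[R]_d -> R := fun x => \sum_(j < p) gs j x.

Definition depends_only_on (R : realType) (d : nat) (J : {set 'I_d})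
  (f : 'rV[R]_d -> R) : Prop :=
  forall x y : 'rV[R]_d, (forall k, k \in J -> x ord0 k = y ord0 k) -> f x = f y.

Definition fun_subspace (R : realType) (d : nat) (G : set ('rV[R]_d -> R)) : Prop :=
  G (fun _ => 0) /\
  (forall f g, G f -> G g -> G (fun x => f x + g x)) /\
  (forall (a : R) f, G f -> G (fun x => a * f x)).

Definition seminorm_on (R : realType) (d : nat) (G : set ('rV[R]_d -> R))
  (N : ('rV[R]_d -> R) -> R) : Prop :=
  (forall f, G f -> 0 <= N f) /\
  (forall (a : R) f, G f -> N (fun x => a * f x) = `|a| * N f) /\
  (forall f g, G f -> G g -> N (fun x => f x + g x) <= N f + N g).

Definition mutually_independent (R : realType) (dT : measure_display)
  (T : measurableType dT) (P : probability T R) (n : nat) (e : 'I_n -> T -> R) : Prop :=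
  forall B : 'I_n -> set R, (forall i, measurable (B i)) ->
    fine (P (\bigcap_(i in [set: 'I_n]) (e i @^-1` B i))) =
    \prod_(i < n) fine (P (e i @^-1` B i)).

Definition penalty (R : realType) (d n p : nat) (X : 'I_n -> 'rV[R]_d)
  (rho lam : 'I_p -> R) (Fn : 'I_p -> ('rV[R]_d -> R) -> R)
  (gs : 'I_p -> 'rV[R]_d -> R) : R :=
  \sum_(j < p) (rho j * Fn j (gs j) + lam j * emp_norm X (gs j)).

Definition G_delta (R : realType) (d n : nat) (X : 'I_n -> 'rV[R]_d)
  (Gj : set ('rV[R]_d -> R)) (Fnj : ('rV[R]_d -> R) -> R) (delta : R)
  : set ('rV[R]_d -> R) :=
  [set f | Gj f /\ Fnj f + emp_norm X f / delta <= 1].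

(* Main.v *)
Require Import Defs.
From HB Require Import structures.
From mathcomp Require Import all_boot all_order all_algebra.
From mathcomp Require Import all_classical all_reals all_analysis.
Import Order.TTheory GRing.Theory Num.Theory.
Local Open Scope classical_set_scope.
Local Open Scope ring_scope.
From mathcomp Require Import ring lra.

Section Avg.
Variables (R : realType) (n : nat).
Implicit Types (F G : 'I_n -> R).

Definition avg F : R := n%:R^-1 * \sum_(i < n) F i.

Lemma avg_ext F G : (forall i, F i = G i) -> avg F = avg G.
Proof. by move=> h; rewrite /avg; congr (_ * _); apply: eq_bigr. Qed.

Lemma avgD F G : avg (fun i => F i + G i) = avg F + avg G.
Proof. by rewrite /avg big_split /= mulrDr. Qed.

Lemma avgZ c F : avg (fun i => c * F i) = c * avg F.
Proof. by rewrite /avg -mulr_sumr mulrCA. Qed.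

Lemma avgN F : avg (fun i => - F i) = - avg F.
Proof. by rewrite /avg sumrN mulrN. Qed.

Lemma avgB F G : avg (fun i => F i - G i) = avg F - avg G.
Proof. by rewrite avgD avgN. Qed.

Lemma avg_le F G : (forall i, F i <= G i) -> avg F <= avg G.
Proof.
move=> h; rewrite /avg ler_wpM2l ?invr_ge0 ?ler0n //.
by apply: ler_sum => i _.
Qed.

Lemma avg_ge0 F : (forall i, 0 <= F i) -> 0 <= avg F.
Proof.
move=> h; rewrite /avg mulr_ge0 ?invr_ge0 ?ler0n //.
by apply: sumr_ge0 => i _.
Qed.

Lemma avg_sum (p : nat) (F : 'I_p -> 'I_n -> R) :
  avg (fun i => \sum_(j < p) F j i) = \sum_(j < p) avg (F j).
Proof. by rewrite /avg exchange_big /= mulr_sumr. Qed.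

Lemma avg_CS F G :
  avg (fun i => F i * G i) <= Num.sqrt (avg (fun i => F i ^+ 2)) * Num.sqrt (avg (fun i => G i ^+ 2)).
Proof.
set A := avg (fun i => F i ^+ 2); set B := avg (fun i => G i ^+ 2).
have A0 : 0 <= A by apply: avg_ge0 => i; exact: sqr_ge0.
have B0 : 0 <= B by apply: avg_ge0 => i; exact: sqr_ge0.
set C := avg (fun i => F i * G i).
have key : forall k, 0 < k -> 2 * C <= k * A + B / k.
  move=> k k0; rewrite /C /A /B -avgZ -avgZ.
  rewrite mulrC -avgZ -avgD; apply: avg_le => i.
  have : 0 <= (k * F i - G i) ^+ 2 / k by rewrite divr_ge0 ?sqr_ge0 // ltW.
  have kn : k != 0 by rewrite gt_eqF.
  have -> : (k * F i - G i) ^+ 2 / k = k * F i ^+ 2 + k^-1 * G i ^+ 2 - 2 * (F i * G i).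
    by field.
  lra.
set r := Num.sqrt A; set s := Num.sqrt B.
have r0 : 0 <= r by exact: sqrtr_ge0.
have s0 : 0 <= s by exact: sqrtr_ge0.
have Ar : A = r ^+ 2 by rewrite sqr_sqrtr.
have Bs : B = s ^+ 2 by rewrite sqr_sqrtr.
suff h : forall e, 0 < e -> 2 * C <= 2 * (r * s) + e * (r + s).
  rewrite leNgt; apply/negP => lt.
  set e := (C - r * s) / (r + s + 1).
  have e0 : 0 < e by rewrite divr_gt0 // ?subr_gt0 //; lra.
  have := h e e0.
  have : e * (r + s) < C - r * s.
    rewrite /e mulrAC ltr_pdivrMr; last lra.
    have : 0 < C - r * s by rewrite subr_gt0.
    nra.
  lra.
move=> e e0.
have re : 0 < r + e by lra.
have se : 0 < s + e by lra.
have := key ((s + e) / (r + e)) (divr_gt0 se re).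
rewrite Ar Bs.
have h1 : (s + e) / (r + e) * r ^+ 2 <= (s + e) * r.
  rewrite mulrAC ler_pdivrMr // -mulrA.
  have : r ^+ 2 <= r * (r + e) by nra.
  nra.
have h2 : s ^+ 2 / ((s + e) / (r + e)) <= s * (r + e).
  rewrite invf_div mulrA ler_pdivrMr //.
  have : s ^+ 2 <= s * (s + e) by nra.
  move=> hs; have := ler_wpM2r (ltW re) hs. nra.
lra.
Qed.

End Avg.
Arguments avg {R n}.


Section EN.
Variables (R : realType) (d n : nat) (X : 'I_n -> 'rV[R]_d).
Implicit Types (f g : 'rV[R]_d -> R).

Lemma enE f : emp_norm X f = Num.sqrt (avg (fun i => f (X i) ^+ 2)).
Proof. by []. Qed.

Lemma en_ge0 f : 0 <= emp_norm X f.
Proof. exact: sqrtr_ge0. Qed.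

Lemma en_sq f : emp_norm X f ^+ 2 = avg (fun i => f (X i) ^+ 2).
Proof. by rewrite enE sqr_sqrtr //; apply: avg_ge0 => i; exact: sqr_ge0. Qed.

Lemma en_ext f g : (forall x, f x = g x) -> emp_norm X f = emp_norm X g.
Proof. by move=> h; congr emp_norm; apply/funext. Qed.

Lemma en_scale a f : emp_norm X (fun x => a * f x) = `|a| * emp_norm X f.
Proof.
rewrite !enE (@avg_ext _ _ _ (fun i => a ^+ 2 * f (X i) ^+ 2)); last by move=> i; rewrite exprMn.
by rewrite avgZ sqrtrM ?sqr_ge0 // sqrtr_sqr.
Qed.

Lemma en_opp f : emp_norm X (fun x => - f x) = emp_norm X f.
Proof.
rewrite (en_ext _ (fun x => (-1) * f x)); last by move=> x; rewrite mulN1r.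
by rewrite en_scale normrN normr1 mul1r.
Qed.

Lemma en_add f g : emp_norm X (fun x => f x + g x) <= emp_norm X f + emp_norm X g.
Proof.
have h0 : 0 <= emp_norm X f + emp_norm X g by rewrite addr_ge0 ?en_ge0.
rewrite -(ger0_norm h0) -sqrtr_sqr enE ler_sqrt ?sqr_ge0 //.
rewrite (@avg_ext _ _ _ (fun i => f (X i) ^+ 2 + (g (X i) ^+ 2 + 2 * (f (X i) * g (X i))))); last first.
  by move=> i; ring.
rewrite avgD avgD avgZ -!en_sq.
have := @avg_CS _ _ (fun i => f (X i)) (fun i => g (X i)).
rewrite -!enE => h. nra.
Qed.

Lemma en_sub f g : emp_norm X (fun x => f x - g x) <= emp_norm X f + emp_norm X g.
Proof.
by rewrite -(en_opp g) (le_trans (en_add _ _)).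
Qed.

Lemma en_tri2 f g : emp_norm X g <= emp_norm X f + emp_norm X (fun x => f x - g x).
Proof.
rewrite (en_ext g (fun x => f x + - (f x - g x))); last by move=> x; ring.
by rewrite (le_trans (en_add _ _)) // en_opp.
Qed.

End EN.

Lemma avgZr (R : realType) n (F : 'I_n -> R) c : avg (fun i => F i * c) = avg F * c.
Proof. by rewrite (@avg_ext _ _ _ (fun i => c * F i)) ?avgZ 1?mulrC // => i; rewrite mulrC. Qed.

Lemma lim_le (R : realType) (x y c : R) :
  (forall t, 0 < t <= 1 -> x <= y + t * c) -> x <= y.
Proof.
move=> h; rewrite leNgt; apply/negP => lt.
set t := (x - y) / (x - y + `|c| + 1).
have c0 : 0 <= `|c| by [].
have den : 0 < x - y + `|c| + 1 by lra.
have t0 : 0 < t by rewrite divr_gt0 //; lra.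
have t1 : t <= 1 by rewrite ler_pdivrMr //; lra.
have := h t; rewrite t0 t1 => /(_ isT).
have : t * c <= t * `|c| by apply: ler_wpM2l; [exact: ltW | exact: ler_norm].
have : t * `|c| < x - y.
  rewrite /t mulrAC ltr_pdivrMr //.
  have : 0 < x - y by lra.
  nra.
lra.
Qed.

Section SN.
Variables (R : realType) (d : nat) (G : set ('rV[R]_d -> R)) (N : ('rV[R]_d -> R) -> R).
Hypotheses (HG : fun_subspace G) (HN : seminorm_on G N).
Implicit Types (f g : 'rV[R]_d -> R).

Lemma G_add f g : G f -> G g -> G (fun x => f x + g x).
Proof. by case: HG => _ [h _]; apply: h. Qed.

Lemma G_scale a {f} : G f -> G (fun x => a * f x).
Proof. by case: HG => _ [_ h]; apply: h. Qed.

Lemma G_opp f : G f -> G (fun x => - f x).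
Proof.
move=> Gf; have -> : (fun x => - f x) = (fun x => (-1) * f x).
  by apply/funext => x; rewrite mulN1r.
exact: G_scale.
Qed.

Lemma G_sub f g : G f -> G g -> G (fun x => f x - g x).
Proof. by move=> Gf Gg; apply: G_add => //; apply: G_opp. Qed.

Lemma N_ge0 f : G f -> 0 <= N f.
Proof. by case: HN => h _; apply: h. Qed.

Lemma N_scale a f : G f -> N (fun x => a * f x) = `|a| * N f.
Proof. by case: HN => _ [h _]; apply: h. Qed.

Lemma N_add {f g} : G f -> G g -> N (fun x => f x + g x) <= N f + N g.
Proof. by case: HN => _ [_ h]; apply: h. Qed.

Lemma N_opp f : G f -> N (fun x => - f x) = N f.
Proof.
move=> Gf; have -> : (fun x => - f x) = (fun x => (-1) * f x).
  by apply/funext => x; rewrite mulN1r.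
by rewrite N_scale // normrN normr1 mul1r.
Qed.

Lemma N_sub f g : G f -> G g -> N (fun x => f x - g x) <= N f + N g.
Proof. by move=> Gf Gg; rewrite -(N_opp g Gg); apply: N_add => //; apply: G_opp. Qed.

Lemma N_tri2 f g : G f -> G g -> N g <= N f + N (fun x => f x - g x).
Proof.
move=> Gf Gg; have Gh := @G_sub f g Gf Gg.
have e : N g = N (fun x => f x + - (f x - g x)).
  by congr N; apply/funext => x; ring.
by rewrite e; apply: le_trans (@N_add _ _ Gf (@G_opp _ Gh)) _; rewrite N_opp.
Qed.

Lemma conv_eq f g t : (fun x => f x + t * (g x - f x)) = (fun x => (1 - t) * f x + t * g x).
Proof. by apply/funext => x; ring. Qed.

Lemma G_conv f g t : G f -> G g -> G (fun x => f x + t * (g x - f x)).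
Proof. by move=> Gf Gg; rewrite conv_eq; apply: G_add; apply: G_scale. Qed.

Lemma N_conv f g t : G f -> G g -> 0 <= t <= 1 ->
  N (fun x => f x + t * (g x - f x)) <= (1 - t) * N f + t * N g.
Proof.
move=> Gf Gg /andP[t0 t1]; rewrite conv_eq.
apply: le_trans (N_add (G_scale _ Gf) (G_scale _ Gg)) _.
rewrite !N_scale // !ger0_norm //; lra.
Qed.

End SN.
Arguments G_add {R d G} HG {f g}.
Arguments G_scale {R d G} HG a {f}.
Arguments G_opp {R d G} HG {f}.
Arguments G_sub {R d G} HG {f g}.
Arguments G_conv {R d G} HG {f g} t.
Arguments N_ge0 {R d G N} HN {f}.
Arguments N_scale {R d G N} HN a {f}.
Arguments N_add {R d G N} HN {f g}.
Arguments N_opp {R d G N} HN {f}.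
Arguments N_sub {R d G N} HG HN {f g}.
Arguments N_tri2 {R d G N} HG HN {f g}.
Arguments N_conv {R d G N} HG HN {f g t}.

Lemma en_conv (R : realType) d n (X : 'I_n -> 'rV[R]_d) f g t : 0 <= t <= 1 ->
  emp_norm X (fun x => f x + t * (g x - f x)) <= (1 - t) * emp_norm X f + t * emp_norm X g.
Proof.
move=> /andP[t0 t1]; rewrite conv_eq.
rewrite (le_trans (@en_add _ _ _ X _ _)) // !en_scale !ger0_norm //; lra.
Qed.

Lemma final_alg (R : realType) (Dn Dl Ts Q Rh a2 Lm k A0 x0 : R) :
  1 < A0 -> 1 < x0 -> (x0 + 1) / (x0 - 1) < A0 -> 0 < k -> 0 <= Dl -> 0 <= Lm ->
  0 <= Ts -> 0 <= a2 -> a2 / 2 <= Dn -> (A0 - 1) * Rh <= Dn -> Rh = Q + Ts ->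
  Dn <= Dl + 2 * A0 * Ts ->
  (Q <= x0 * Ts -> k ^+ 2 * Ts ^+ 2 <= Lm * a2) ->
  Dn <= (1 - 2 * A0 / ((x0 + 1) * (A0 - 1)))^-1 * Dl
        + 2 * ((x0 + 1) * (A0 - 1)) ^+ 2 * k ^- 2 * Lm.
Proof.
move=> A1 x1 hA k0 Dl0 Lm0 Ts0 a20 ha2 hRh eRh hD hC.
have hA' : x0 + 1 < A0 * (x0 - 1) by rewrite -ltr_pdivrMr // subr_gt0.
set x2 := (x0 + 1) * (A0 - 1).
have x2A : 2 * A0 < x2 by rewrite /x2; nra.
have x2p : 0 < x2 by lra.
have xi1E : (1 - 2 * A0 / x2)^-1 = x2 / (x2 - 2 * A0).
  have x2n : x2 != 0 by rewrite gt_eqF.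
  have x2n' : x2 - 2 * A0 != 0 by rewrite gt_eqF // subr_gt0.
  have -> : 1 - 2 * A0 / x2 = (x2 - 2 * A0) / x2 by field.
  by rewrite invf_div.
rewrite xi1E.
rewrite -[2 * x2 ^+ 2 * k ^- 2 * Lm]mulrA.
set L := k ^- 2 * Lm.
have L0 : 0 <= L by rewrite /L mulr_ge0 // invr_ge0; exact: sqr_ge0.
have d0 : 0 < x2 - 2 * A0 by lra.
have step1 : Dn <= x2 * Dl / (x2 - 2 * A0) -> Dn <= x2 / (x2 - 2 * A0) * Dl + 2 * x2 ^+ 2 * L.
  move=> h; have : 0 <= 2 * x2 ^+ 2 * L by rewrite mulr_ge0 // mulr_ge0 // sqr_ge0.
  by rewrite mulrAC; lra.
have [lt|le] := ltrP (x0 * Ts) Q.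
  apply: step1; rewrite ler_pdivlMr //.
  have : x2 * Ts <= (A0 - 1) * Rh by rewrite eRh /x2; nra.
  nra.
have hTL : Ts ^+ 2 <= L * a2.
  have h := hC le; rewrite /L -mulrA mulrC ler_pdivlMr ?exprn_gt0 //.
  by rewrite mulrC.
have hAM : 4 * x2 * Ts <= a2 + 4 * x2 ^+ 2 * L.
  have x22 : 0 <= x2 ^+ 2 by exact: sqr_ge0.
  have h0 : 0 <= a2 + 4 * x2 ^+ 2 * L by nra.
  have h1 : 0 <= 4 * x2 * Ts by nra.
  rewrite -(@ler_pXn2r _ 2) //.
  have : 0 <= (a2 - 4 * x2 ^+ 2 * L) ^+ 2 by exact: sqr_ge0.
  have : 16 * x2 ^+ 2 * Ts ^+ 2 <= 16 * x2 ^+ 2 * (L * a2).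
    by rewrite ler_wpM2l // mulr_ge0.
  nra.
have h2 : (x2 - A0) * Dn <= x2 * Dl + 2 * A0 * x2 ^+ 2 * L.
  have : 2 * x2 * (2 * A0 * Ts) <= A0 * (a2 + 4 * x2 ^+ 2 * L).
    have : 0 <= A0 by lra.
    nra.
  nra.
have dA : 0 < x2 - A0 by lra.
rewrite -(@ler_pM2l _ (x2 - A0)) //.
apply: (le_trans h2).
rewrite mulrDr.
apply: lerD.
  have dn : x2 - 2 * A0 != 0 by rewrite gt_eqF.
  have -> : (x2 - A0) * (x2 / (x2 - 2 * A0) * Dl) = ((x2 - A0) / (x2 - 2 * A0)) * (x2 * Dl).
    by field.
  have r1 : 1 <= (x2 - A0) / (x2 - 2 * A0) by rewrite ler_pdivlMr // mul1r; lra.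
  have : 0 <= x2 * Dl by rewrite mulr_ge0 // ltW.
  nra.
have x22 : 0 <= x2 ^+ 2 by exact: sqr_ge0.
have : 0 <= x2 ^+ 2 * L by rewrite mulr_ge0.
nra.
Qed.

Section Det.
Variables (R : realType) (d n p : nat) (X : 'I_n -> 'rV[R]_d)
  (G : 'I_p -> set ('rV[R]_d -> R)) (Fn : 'I_p -> ('rV[R]_d -> R) -> R)
  (lam w : 'I_p -> R) (A0 : R) (e : 'I_n -> R) (gstar : 'rV[R]_d -> R)
  (gbar ghat : 'I_p -> 'rV[R]_d -> R).
Hypotheses (HG : forall j, fun_subspace (G j)) (HN : forall j, seminorm_on (G j) (Fn j))
  (lam0 : forall j, 0 <= lam j) (w0 : forall j, 0 <= w j)
  (Gbar : forall j, G j (gbar j)) (Ghat : forall j, G j (ghat j)).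

Lemma first_order :
  0 <= A0 ->
  (forall gs, (forall j, G j (gs j)) ->
     emp_sq_res X (fun i => gstar (X i) + e i) (gsum ghat) / 2
       + A0 * penalty X (fun j => lam j * w j) lam Fn ghat
     <= emp_sq_res X (fun i => gstar (X i) + e i) (gsum gs) / 2
       + A0 * penalty X (fun j => lam j * w j) lam Fn gs) ->
  emp_norm X (fun x => gsum ghat x - gstar x) ^+ 2 / 2
    + emp_norm X (fun x => gsum ghat x - gsum gbar x) ^+ 2 / 2
  <= emp_norm X (fun x => gsum gbar x - gstar x) ^+ 2 / 2
    + emp_inner X e (fun x => gsum ghat x - gsum gbar x)
    + A0 * (penalty X (fun j => lam j * w j) lam Fn gbar
            - penalty X (fun j => lam j * w j) lam Fn ghat).
Proof.
move=> A00 Hopt.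
set u := gsum ghat; set v := gsum gbar.
set Y := fun i => gstar (X i) + e i.
set Rhat := penalty _ _ _ _ ghat; set Rbar := penalty _ _ _ _ gbar.
set I := avg (fun i => (Y i - u (X i)) * (v (X i) - u (X i))).
set Q2 := avg (fun i => (v (X i) - u (X i)) ^+ 2).
have key : forall t, 0 < t <= 1 -> I <= A0 * (Rbar - Rhat) + t * (Q2 / 2).
  move=> t /andP[t0 t1].
  have t01 : 0 <= t <= 1 by rewrite ltW.
  pose gs := fun j x => ghat j x + t * (gbar j x - ghat j x).
  have Ggs : forall j, G j (gs j) by move=> j; apply: (G_conv (HG j)); [exact: Ghat | exact: Gbar].
  have := Hopt gs Ggs.
  have gsE : gsum gs = fun x => u x + t * (v x - u x).
    apply/funext => x; rewrite /gsum /gs /u /v /gsum big_split /= -mulr_sumr sumrB //.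
  have resE : emp_sq_res X Y (gsum gs) = emp_sq_res X Y u - 2 * t * I + t ^+ 2 * Q2.
    rewrite gsE /emp_sq_res -!/(avg _) /I /Q2 -avgZ -avgZ -avgB -avgD.
    by apply: avg_ext => i; ring.
  have penE : penalty X (fun j => lam j * w j) lam Fn gs <= (1 - t) * Rhat + t * Rbar.
    rewrite /Rhat /Rbar /penalty !mulr_sumr -big_split /=.
    apply: ler_sum => j _.
    have h1 := N_conv (HG j) (HN j) (Ghat j) (Gbar j) t01.
    have h2 := @en_conv _ _ _ X (ghat j) (gbar j) t t01.
    have l0 := lam0 j; have lw0 : 0 <= lam j * w j by rewrite mulr_ge0.
    have := ler_wpM2l l0 h2; have := ler_wpM2l lw0 h1.
    rewrite /gs; lra.
  rewrite resE => h.
  have hp := ler_wpM2l A00 penE.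
  have : t * I <= t * (A0 * (Rbar - Rhat) + t * (Q2 / 2)) by move: h hp; rewrite -/Y -/u -/Rhat; lra.
  by rewrite ler_pM2l.
have hI : I <= A0 * (Rbar - Rhat).
  apply: (@lim_le _ _ _ (Q2 / 2)) => t ht; exact: key.
suff hE : I = emp_norm X (fun x => u x - gstar x) ^+ 2 / 2
    + emp_norm X (fun x => u x - v x) ^+ 2 / 2
    - emp_norm X (fun x => v x - gstar x) ^+ 2 / 2
    - emp_inner X e (fun x => u x - v x) by lra.
rewrite !en_sq /emp_inner -/(avg _) -!avgZr -avgD -avgB -avgB.
by apply: avg_ext => i; rewrite /Y; field.
Qed.


Let hh := fun j x => ghat j x - gbar j x.

Lemma Ghh j : G j (hh j).
Proof. exact: (G_sub (HG j) (Ghat j) (Gbar j)). Qed.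

Lemma innerE (f : 'rV[R]_d -> R) : emp_inner X e f = avg (fun i => e i * f (X i)).
Proof. by []. Qed.

Lemma inner_sum :
  emp_inner X e (fun x => gsum ghat x - gsum gbar x) = \sum_(j < p) emp_inner X e (hh j).
Proof.
rewrite innerE; under eq_bigr do rewrite innerE.
rewrite -avg_sum; apply: avg_ext => i.
by rewrite /gsum /hh -sumrB mulr_sumr.
Qed.

Lemma noise_step :
  (forall j f, G j f -> `|emp_inner X e f| <= lam j * w j * Fn j f + lam j * emp_norm X f) ->
  emp_inner X e (fun x => gsum ghat x - gsum gbar x)
    <= penalty X (fun j => lam j * w j) lam Fn hh.
Proof.
move=> Hn; rewrite inner_sum /penalty; apply: ler_sum => j _.
exact: le_trans (ler_norm _) (Hn j _ (Ghh j)).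
Qed.

Lemma pen_ge0 gs : (forall j, G j (gs j)) -> 0 <= penalty X (fun j => lam j * w j) lam Fn gs.
Proof.
move=> Gs; rewrite /penalty; apply: sumr_ge0 => j _.
rewrite addr_ge0 // mulr_ge0 ?en_ge0 ?mulr_ge0 //.
exact: (N_ge0 (HN j)).
Qed.

Lemma tri_step (S : {set 'I_p}) :
  penalty X (fun j => lam j * w j) lam Fn hh + penalty X (fun j => lam j * w j) lam Fn gbar
    - penalty X (fun j => lam j * w j) lam Fn ghat
  <= 2 * (\sum_(j < p) lam j * w j * Fn j (gbar j)
          + \sum_(j < p | j \notin S) lam j * emp_norm X (gbar j))
     + 2 * \sum_(j < p | j \in S) lam j * emp_norm X (hh j).
Proof.
rewrite /penalty -big_split /= -sumrB.
rewrite [\sum_(j < p | j \notin S) _]big_mkcond [\sum_(j < p | j \in S) _]big_mkcond /= !mulr_sumr -!big_split /= mulr_sumr -big_split /=.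
apply: ler_sum => j _.
have hF := N_sub (HG j) (HN j) (Ghat j) (Gbar j).
have hT := N_tri2 (HG j) (HN j) (Ghat j) (Gbar j).
have e1 := @en_sub _ _ _ X (ghat j) (gbar j).
have e2 := @en_tri2 _ _ _ X (ghat j) (gbar j).
have l0 := lam0 j; have lw0 : 0 <= lam j * w j by rewrite mulr_ge0.
have Fb := N_ge0 (HN j) (Gbar j).
have := ler_wpM2l lw0 hF; have := ler_wpM2l l0 e1; have := ler_wpM2l l0 e2.
rewrite /hh; case: (j \in S) => /=; lra.
Qed.

Lemma split_step (S : {set 'I_p}) :
  penalty X (fun j => lam j * w j) lam Fn hh =
   (\sum_(j < p) lam j * w j * Fn j (hh j) + \sum_(j < p | j \notin S) lam j * emp_norm X (hh j))
   + \sum_(j < p | j \in S) lam j * emp_norm X (hh j).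
Proof.
rewrite /penalty [\sum_(j < p | j \notin S) _]big_mkcond [\sum_(j < p | j \in S) _]big_mkcond /= -!big_split /=.
by apply: eq_bigr => j _; case: (j \in S) => /=; ring.
Qed.


Lemma det_main (S : {set 'I_p}) (kappa0 xi0 : R) :
  1 < A0 -> 0 < kappa0 -> 1 < xi0 -> (xi0 + 1) / (xi0 - 1) < A0 ->
  (forall j f, G j f -> `|emp_inner X e f| <= lam j * w j * Fn j f + lam j * emp_norm X f) ->
  (forall f : 'I_p -> 'rV[R]_d -> R, (forall j, G j (f j)) ->
     \sum_(j < p) lam j * w j * Fn j (f j)
       + \sum_(j < p | j \notin S) lam j * emp_norm X (f j)
       <= xi0 * \sum_(j < p | j \in S) lam j * emp_norm X (f j) ->
     kappa0 ^+ 2 * (\sum_(j < p | j \in S) lam j * emp_norm X (f j)) ^+ 2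
       <= (\sum_(j < p | j \in S) lam j ^+ 2) * emp_norm X (gsum f) ^+ 2) ->
  (forall gs, (forall j, G j (gs j)) ->
     emp_sq_res X (fun i => gstar (X i) + e i) (gsum ghat) / 2
       + A0 * penalty X (fun j => lam j * w j) lam Fn ghat
     <= emp_sq_res X (fun i => gstar (X i) + e i) (gsum gs) / 2
       + A0 * penalty X (fun j => lam j * w j) lam Fn gs) ->
  emp_norm X (fun x => gsum ghat x - gstar x) ^+ 2 / 2
    + emp_norm X (fun x => gsum ghat x - gsum gbar x) ^+ 2 / 2
    + (A0 - 1) * penalty X (fun j => lam j * w j) lam Fn (fun j x => ghat j x - gbar j x)
  <= (1 - 2 * A0 / ((xi0 + 1) * (A0 - 1)))^-1 *
       (emp_norm X (fun x => gsum gbar x - gstar x) ^+ 2 / 2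
        + 2 * A0 * (\sum_(j < p) (lam j * w j) * Fn j (gbar j)
                    + \sum_(j < p | j \notin S) lam j * emp_norm X (gbar j)))
     + 2 * ((xi0 + 1) * (A0 - 1)) ^+ 2 * kappa0 ^- 2 * (\sum_(j < p | j \in S) lam j ^+ 2).
Proof.
move=> A1 k0 x1 hA Hn Hc Hopt.
have A00 : 0 <= A0 by lra.
have F1 := first_order A00 Hopt.
have F2 := noise_step Hn.
have F3 := tri_step S.
have F4 := split_step S.
have Rh0 := @pen_ge0 hh Ghh.
have -> : (fun j x => ghat j x - gbar j x) = hh by [].
set a1 := emp_norm X (fun x => gsum ghat x - gstar x) ^+ 2.
set a2 := emp_norm X (fun x => gsum ghat x - gsum gbar x) ^+ 2.
set b := emp_norm X (fun x => gsum gbar x - gstar x) ^+ 2.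
set Rh := penalty X (fun j => lam j * w j) lam Fn hh.
set Rhat := penalty X (fun j => lam j * w j) lam Fn ghat.
set Rbar := penalty X (fun j => lam j * w j) lam Fn gbar.
set Fb := \sum_(j < p) lam j * w j * Fn j (gbar j).
set Sb := \sum_(j < p | j \notin S) lam j * emp_norm X (gbar j).
set Ts := \sum_(j < p | j \in S) lam j * emp_norm X (hh j).
set Q := \sum_(j < p) lam j * w j * Fn j (hh j) + \sum_(j < p | j \notin S) lam j * emp_norm X (hh j).
have a10 : 0 <= a1 by exact: sqr_ge0.
have a20 : 0 <= a2 by exact: sqr_ge0.
have b0 : 0 <= b by exact: sqr_ge0.
have Fb0 : 0 <= Fb.
  apply: sumr_ge0 => j _; rewrite mulr_ge0 ?mulr_ge0 //; exact: (N_ge0 (HN j) (Gbar j)).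
have Sb0 : 0 <= Sb by apply: sumr_ge0 => j _; rewrite mulr_ge0 ?en_ge0.
have Ts0 : 0 <= Ts by apply: sumr_ge0 => j _; rewrite mulr_ge0 ?en_ge0.
have Lm0 : 0 <= \sum_(j < p | j \in S) lam j ^+ 2 by apply: sumr_ge0 => j _; exact: sqr_ge0.
apply: (@final_alg _ _ _ Ts Q Rh a2) => //.
- have : 0 <= 2 * A0 * (Fb + Sb) by rewrite mulr_ge0 ?mulr_ge0 ?addr_ge0.
  lra.
- have : 0 <= a1 / 2 by lra.
  have : 0 <= (A0 - 1) * Rh by rewrite mulr_ge0 //; lra.
  lra.
- have : 0 <= a1 / 2 + a2 / 2 by lra.
  lra.
- move: F1 F2 F3; rewrite -/a1 -/a2 -/b -/Rbar -/Rhat -/Rh -/Fb -/Sb -/Ts => F1 F2 F3.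
  have := ler_wpM2l A00 F3.
  nra.
- move=> hQ.
  have := Hc hh Ghh hQ.
  have -> : gsum hh = fun x => gsum ghat x - gsum gbar x.
    by apply/funext => x; rewrite /gsum /hh sumrB.
  by [].
Qed.

End Det.

Lemma meas_step (R : realType) (dT : measure_display) (T : measurableType dT)
  (P : probability T R) (p : nat) (A : nat -> set T) (c : R) :
  (forall k, (k < p)%N -> measurable (A k)) ->
  (forall k, (k < p)%N -> (P (A k) <= c%:E)%E) ->
  measurable (~` \big[setU/set0]_(k < p) A k) /\
  ((1 - p%:R * c)%:E <= P (~` \big[setU/set0]_(k < p) A k))%E.
Proof.
move=> mA PA.
have mU : measurable (\big[setU/set0]_(k < p) A k).
  by apply: bigsetU_measurable => i _; apply: mA.
split; first exact: measurableC.
rewrite probability_setC //.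
have hU : (P (\big[setU/set0]_(k < p) A k) <= (p%:R * c)%:E)%E.
  apply: le_trans (Boole_inequality P mA) _.
  apply: (@le_trans _ _ (\sum_(i < p) c%:E)%E).
    by apply: lee_sum => i _; apply: PA.
  by rewrite sumEFin sumr_const card_ord mulr_natl.
by rewrite EFinB; apply: leeB.
Qed.

Lemma inner_scale (R : realType) d n (X : 'I_n -> 'rV[R]_d) (e : 'I_n -> R) a f :
  emp_inner X e (fun x => a * f x) = a * emp_inner X e f.
Proof.
rewrite /emp_inner -!/(avg _) -avgZ; apply: avg_ext => i /=; ring.
Qed.

Lemma scale_noise (R : realType) d n (X : 'I_n -> 'rV[R]_d) (e : 'I_n -> R)
  (Gj : set ('rV[R]_d -> R)) (N : ('rV[R]_d -> R) -> R) (l wj : R) :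
  fun_subspace Gj -> seminorm_on Gj N -> 0 < wj -> 0 <= l ->
  (forall f, G_delta X Gj N wj f -> `|emp_inner X e f| <= l * wj) ->
  forall f, Gj f -> `|emp_inner X e f| <= l * wj * N f + l * emp_norm X f.
Proof.
move=> HG HN w0 l0 hB f Gf.
have N0 := N_ge0 HN Gf.
have e0 := @en_ge0 _ _ _ X f.
set c := N f + emp_norm X f / wj.
have c0 : 0 <= c by rewrite /c addr_ge0 // divr_ge0 // ltW.
have rhsE : l * wj * N f + l * emp_norm X f = l * wj * c.
  by rewrite /c; field; rewrite gt_eqF.
rewrite rhsE.
have hM : forall M, 0 < M -> M * c <= 1 -> M * `|emp_inner X e f| <= l * wj.
  move=> M M0 Mc.
  have := hB (fun x => M * f x); rewrite inner_scale normrM gtr0_norm //; apply.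
  split; first exact: (G_scale HG).
  rewrite (N_scale HN) // en_scale gtr0_norm //.
  suff -> : M * N f + M * emp_norm X f / wj = M * c by [].
  by rewrite /c; ring.
have [cp|cz] := ltrP 0 c.
  have := hM c^-1; rewrite invr_gt0 mulVf ?gt_eqF // => /(_ cp (lexx _)).
  rewrite -ler_pdivlMl; last by rewrite invr_gt0.
  by rewrite invrK mulrC.
have c00 : c = 0 by apply/eqP; rewrite eq_le cz c0.
rewrite c00 mulr0.
rewrite leNgt; apply/negP => pos.
have := hM ((l * wj + 1) / `|emp_inner X e f|).
rewrite c00 mulr0 ler01 divr_gt0 //; last by rewrite ltr_wpDl // mulr_ge0 // ltW.
move=> /(_ isT isT); rewrite mulrAC -mulrA divff ?gt_eqF // mulr1.
lra.
Qed.
Theorem theorem1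
  (R : realType) (dT : measure_display) (T : measurableType dT)
  (P : probability T R)
  (n d p : nat) (X : 'I_n -> 'rV[R]_d)                 (* fixed design *)
  (gstar : 'rV[R]_d -> R)                               (* arbitrary g* *)
  (eps : 'I_n -> T -> R)                                (* noise *)
  (J : 'I_p -> {set 'I_d})                              (* coordinates x^(j) *)
  (G : 'I_p -> set ('rV[R]_d -> R))                     (* spaces G_j *)
  (Fn : 'I_p -> ('rV[R]_d -> R) -> R)                   (* semi-norms ||.||_{F,j} *)
  (D0 D1 C1 : R) (psi : 'I_p -> R -> R)
  (epsilon : R) (w : 'I_p -> R) (A0 : R)
  (S : {set 'I_p}) (kappa0 xi0 : R)
  (gbar : 'I_p -> 'rV[R]_d -> R) :
  (0 < n)%N ->
  (* structure of the model *)
  (forall j, fun_subspace (G j)) ->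
  (forall j f, G j f -> depends_only_on (J j) f) ->
  (forall j, seminorm_on (G j) (Fn j)) ->
  (* sub-Gaussian noise condition *)
  (forall i, measurable_fun setT (eps i)) ->
  mutually_independent P eps ->
  (forall i, (\int[P]_w0 (eps i w0)%:E = 0)%E) ->
  0 < D0 -> 0 < D1 ->
  (forall i, (D0%:E * \int[P]_w0 (expR (eps i w0 ^+ 2 / D0))%:E <= D1%:E)%E) ->
  (* the constant C1 of the maximal inequality (outer-probability reading) *)
  0 < C1 ->
  (forall (delta : R) (F : set ('rV[R]_d -> R)) (ps t : R),
      0 < delta ->
      (forall f, F f -> emp_norm X f <= delta) ->
      (entropy_integral X delta F <= ps%:E)%E ->
      0 < t ->
      exists B : set T, measurable B /\
        [set w0 | exists2 f, F f &
           C1 * ((Num.sqrt n%:R)^-1 * ps + delta * Num.sqrt (t / n%:R))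
             < `|emp_inner X (fun i => eps i w0) f| ] `<=` B /\
        (P B <= (expR (- t))%:E)%E) ->
  (* entropy condition *)
  (forall j (delta : R), 0 < delta <= 1 ->
     (entropy_integral X delta (G_delta X (G j) (Fn j) delta)
       <= (psi j delta)%:E)%E) ->
  (* tuning constants *)
  0 < epsilon < 1 ->
  (forall j, 0 < w j <= 1) ->
  1 < A0 ->
  (* compatibility condition *)
  0 < kappa0 -> 1 < xi0 ->
  let gamma := fun j => (Num.sqrt n%:R)^-1 * psi j (w j) / w j in
  let lam := fun j => C1 * (gamma j + Num.sqrt (ln (p%:R / epsilon) / n%:R)) in
  let rho := fun j => lam j * w j in
  (forall f : 'I_p -> 'rV[R]_d -> R, (forall j, G j (f j)) ->
     \sum_(j < p) lam j * w j * Fn j (f j)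
       + \sum_(j < p | j \notin S) lam j * emp_norm X (f j)
       <= xi0 * \sum_(j < p | j \in S) lam j * emp_norm X (f j) ->
     kappa0 ^+ 2 * (\sum_(j < p | j \in S) lam j * emp_norm X (f j)) ^+ 2
       <= (\sum_(j < p | j \in S) lam j ^+ 2) * emp_norm X (gsum f) ^+ 2) ->
  (* the target gbar *)
  (forall j, G j (gbar j)) ->
  (xi0 + 1) / (xi0 - 1) < A0 ->
  let xi1 := 1 - 2 * A0 / ((xi0 + 1) * (A0 - 1)) in
  let xi2 := (xi0 + 1) * (A0 - 1) in
  exists E : set T, measurable E /\ ((1 - epsilon)%:E <= P E)%E /\
    forall w0, E w0 ->
    let Y := fun i => gstar (X i) + eps i w0 in
    let Kn := fun gs : 'I_p -> 'rV[R]_d -> R =>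
      emp_sq_res X Y (gsum gs) / 2 + A0 * penalty X rho lam Fn gs in
    forall ghat : 'I_p -> 'rV[R]_d -> R,
      (forall j, G j (ghat j)) ->
      (forall gs, (forall j, G j (gs j)) -> Kn ghat <= Kn gs) ->
      emp_norm X (fun x => gsum ghat x - gstar x) ^+ 2 / 2
        + emp_norm X (fun x => gsum ghat x - gsum gbar x) ^+ 2 / 2
        + (A0 - 1) * penalty X rho lam Fn (fun j x => ghat j x - gbar j x)
      <= xi1^-1 *
           (emp_norm X (fun x => gsum gbar x - gstar x) ^+ 2 / 2
            + 2 * A0 * (\sum_(j < p) rho j * Fn j (gbar j)
                        + \sum_(j < p | j \notin S) lam j * emp_norm X (gbar j)))
         + 2 * xi2 ^+ 2 * kappa0 ^- 2 * (\sum_(j < p | j \in S) lam j ^+ 2).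
Proof.
move=> n0 HG HJ HN Hmeas Hind Hmean D00 D10 Hsg C10 Hmax Hent /andP[e0 e1] Hw A1 k0 x1
  gamma lam rho Hc Gbar hA xi1 xi2.
set t := ln (p%:R / epsilon).
have w0 : forall j, 0 < w j by move=> j; case/andP: (Hw j).
have psi0 : forall j, 0 <= psi j (w j).
  move=> j; have h2 := Hent j (w j) (Hw j).
  have h1 : (0 <= entropy_integral X (w j) (G_delta X (G j) (Fn j) (w j)))%E.
    by apply: integral_ge0 => u _; exact: sqrte_ge0.
  by have := le_trans h1 h2; rewrite lee_fin.
have lam0 : forall j, 0 <= lam j.
  move=> j; apply: mulr_ge0; first exact: ltW.
  apply: addr_ge0; last exact: sqrtr_ge0.
  apply: divr_ge0; last exact: ltW.
  apply: mulr_ge0 => //; rewrite invr_ge0; exact: sqrtr_ge0.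
have hB : forall j : 'I_p, exists B : set T, measurable B /\ (P B <= (expR (- t))%:E)%E /\
    (forall w1, ~ B w1 -> forall f, G_delta X (G j) (Fn j) (w j) f ->
       `|emp_inner X (fun i => eps i w1) f| <= lam j * w j).
  move=> j.
  have p1 : (1 <= p)%N by exact: (leq_ltn_trans (leq0n j) (ltn_ord j)).
  have tp : 0 < t.
    rewrite /t ln_gt0 // ltr_pdivlMr // mul1r.
    have : (1 : R) <= p%:R by rewrite ler1n.
    lra.
  have hF : forall f, G_delta X (G j) (Fn j) (w j) f -> emp_norm X f <= w j.
    move=> f [Gf hf].
    have N0 := N_ge0 (HN j) Gf.
    have : emp_norm X f / w j <= 1 by lra.
    by rewrite ler_pdivrMr // mul1r.
  have [B [mB [sub PB]]] := Hmax (w j) (G_delta X (G j) (Fn j) (w j)) (psi j (w j)) t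
    (w0 j) hF (Hent j (w j) (Hw j)) tp.
  exists B; split => //; split => //.
  move=> w1 nB f Ff; rewrite leNgt; apply/negP => lt; apply: nB; apply: sub.
  exists f => //.
  suff <- : lam j * w j = C1 * ((Num.sqrt n%:R)^-1 * psi j (w j) + w j * Num.sqrt (t / n%:R)) by [].
  rewrite /lam /gamma /t; field; rewrite !gt_eqF // ?sqrtr_gt0 ?ltr0n //.
have [B HB] := choice hB.
pose A := fun k : nat => if (insub k : option 'I_p) is Some j then B j else set0.
have AB : forall j : 'I_p, A j = B j by move=> j; rewrite /A valK.
have [mE PE] := @meas_step _ _ _ P p A (expR (- t))
  (fun k hk => ltac:(rewrite -[k]/(nat_of_ord (Ordinal hk)) AB; exact: (HB _).1))
  (fun k hk => ltac:(rewrite -[k]/(nat_of_ord (Ordinal hk)) AB; exact: (HB _).2.1)).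
exists (~` \big[setU/set0]_(k < p) A k); split => //; split.
  apply: le_trans PE; rewrite lee_fin lerD2l lerN2.
  have [p0|pp] := eqVneq p 0%N.
    by rewrite p0 mul0r ltW.
  have pp' : (0 : R) < p%:R by rewrite ltr0n lt0n.
  rewrite /t expRN lnK ?posrE ?divr_gt0 //.
  rewrite invf_div mulrCA divff ?mulr1 // gt_eqF //.
move=> w1 Ew1 Y Kn ghat Ghat Hopt.
have nB : forall j, ~ B j w1.
  move=> j Bj; apply: Ew1; rewrite -AB in Bj; exact: (bigsetU_sup (ltn_ord j)) Bj.
have Hn : forall j f, G j f -> `|emp_inner X (fun i => eps i w1) f|
    <= lam j * w j * Fn j f + lam j * emp_norm X f.
  move=> j f Gf; apply: (@scale_noise _ _ _ X (fun i => eps i w1) (G j) (Fn j) (lam j) (w j) (HG j) (HN j) (w0 j) (lam0 j)) => // g Fg.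
  exact: (HB j).2.2 w1 (nB j) g Fg.
exact: (@det_main R d n p X G Fn lam w A0 (fun i => eps i w1) gstar gbar ghat HG HN lam0
  (fun j => ltW (w0 j)) Gbar Ghat S kappa0 xi0 A1 k0 x1 hA Hn Hc Hopt).
Qed.
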